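(* Let $\mathfrak{F}$ be an assignment to every finite-dimensional quantum system $A$ of a set $\mathfrak{F}(A)$ of density matrices on $A$ (the free states), such that the family of free states is closed under tensor products, partial traces, and permutations (swaps) of subsystems. Then the Choi-defined (CD) operations associated with $\mathfrak{F}$ form a resource theory — i.e., for all systems the identity channel, the swap channel, and the discarding channel (partial trace) are CD operations, and sequential and parallel compositions of CD operations are CD operations — if and only if for all systems $A$ and $B$: (1) the state $\frac{1}{d_A}\Phi_{AA'}$ belongs to $\mathfrak{F}(AA')$; and (2) whenever $\rho_A\in\mathfrak{F}(A)$ and $\mu_{BA'}\in\mathfrak{F}(BA')$ with $\mu_{BA'}$ the renormalized Choi matrix of a quantum channel (i.e. $\operatorname{tr}_B\mu_{BA'}=\frac{1}{d_A}\mathbb{1}_{A'}$), the state $d_A\,\mu_{B:A'}*\rho_A=d_A\operatorname{tr}_A[\mu_{BA}(\mathbb{1}_B\otimes\rho_A^{T})]$ belongs to $\mathfrak{F}(B)$.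
   Context: Systems are finite-dimensional Hilbert spaces; $d_A$ is the dimension of $A$ and $A'$ is a copy of $A$. Fix an orthonormal basis $\{|x\rangle_A\}$ of each system; the unnormalized Choi state is $\Phi_{AA'}=\sum_{x,y}|x\rangle\langle y|_A\otimes|x\rangle\langle y|_{A'}$. The Choi matrix of a channel $\mathcal{M}_{A\to B}$ is $M_{B:A'}=(\mathcal{M}_{A\to B}\otimes\mathcal{I}_{A'})(\Phi_{AA'})$ (output system first, input copy second), and its renormalized Choi matrix is $\mu_{B:A'}=\frac{1}{d_A}M_{B:A'}$, a state with $\operatorname{tr}_B\mu_{BA'}=\frac1{d_A}\mathbb{1}_{A'}$; conversely such a state determines the channel $\mathcal{M}_{A\to B}(\rho_A)=d_A\operatorname{tr}_A[\mu_{BA}(\mathbb{1}_B\otimes\rho_A^T)]$, with $T$ the transpose in the fixed basis. The link product is $N_{C:B'}*M_{B:A'}=\operatorname{tr}_{BB'}[(N_{C:B'}\otimes M_{B:A'})(\mathbb{1}_C\otimes\Phi_{B'B}\otimes\mathbb{1}_{A'})]$; for a state $\rho_A$ (viewed as Choi matrix of a preparation) $M_{B:A'}*\rho_A=\operatorname{tr}_A[M_{B:A}(\mathbb{1}_B\otimes\rho_A^T)]$. A channel $\mathcal{M}_{A\to B}$ is a Choi-defined (CD) operation associated with $\mathfrak{F}$ if its renormalized Choi matrix lies in $\mathfrak{F}(BA')$; states are regarded as channels from the trivial one-dimensional system, whose renormalized Choi matrix is the state itself. A Choi-defined resource theory (CDRT) is a resource theory whose free operations are exactly the CD operations associated with its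 free states. *)

(* Defs.v *)
(* Finite-dimensional quantum theory over the complex numbers
   C = R[i] (R : realType), with systems modelled as finite types of basis
   labels (the fixed orthonormal basis {|x>}), d_A = #|A|, composite systems
   as product types, and operators on A as finite functions A * A -> C
   (X (x, y) = <x| X |y>). *)
From HB Require Import structures.
From mathcomp Require Import all_boot all_order all_algebra.
From mathcomp Require Import complex reals.
Set Implicit Arguments.
Unset Strict Implicit.
Unset Printing Implicit Defensive.
Import Order.TTheory GRing.Theory Num.Theory.
Local Open Scope ring_scope.

Definition op (R : realType) (T : finType) := {ffun T * T -> R[i]}.

Definition eop {R : realType} {T : finType} (x y : T) : op R T :=
  [ffun p => ((p.1 == x) && (p.2 == y))%:R].

Definition idop {R : realType} {T : finType} : op R T :=
  [ffun p => (p.1 == p.2)%:R].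

Definition opmul {R : realType} {T : finType} (X Y : op R T) : op R T :=
  [ffun p => \sum_(k : T) X (p.1, k) * Y (k, p.2)].

Definition optr {R : realType} {T : finType} (X : op R T) : R[i] :=
  \sum_(x : T) X (x, x).

Definition optrans {R : realType} {T : finType} (X : op R T) : op R T :=
  [ffun p => X (p.2, p.1)].

Definition tensor {R : realType} {A B : finType} (X : op R A) (Y : op R B)
  : op R (A * B)%type :=
  [ffun p => X (p.1.1, p.2.1) * Y (p.1.2, p.2.2)].

Definition ptr2 {R : realType} {A B : finType} (X : op R (A * B)%type) : op R A :=
  [ffun p => \sum_(b : B) X ((p.1, b), (p.2, b))].
Definition ptr1 {R : realType} {A B : finType} (X : op R (A * B)%type) : op R B :=
  [ffun p => \sum_(a : A) X ((a, p.1), (a, p.2))].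

(* relabelling of the basis along a map f : X -> Y (used for bijections) *)
Definition relabel {R : realType} {X Y : finType} (f : X -> Y) (M : op R X)
  : op R Y :=
  [ffun p => \sum_(x : X) \sum_(x' : X)
               ((f x == p.1) && (f x' == p.2))%:R * M (x, x')].

Definition psd {R : realType} {T : finType} (X : op R T) : Prop :=
  forall v : T -> R[i],
    0 <= \sum_(x : T) \sum_(y : T) (v x)^* * X (x, y) * v y.

Definition density {R : realType} {T : finType} (X : op R T) : Prop :=
  psd X /\ optr X = 1.

Definition Phi {R : realType} {A : finType} : op R (A * A)%type :=
  \sum_(x : A) \sum_(y : A) tensor (eop x y) (eop x y).

(* permutations of subsystems: the basis relabellings generated by the
   swap AB -> BA, the (trivial) re-bracketings (AB)C <-> A(BC), acting on
   any factor of a composite system, and composition. *)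
Inductive subsys_perm : forall X Y : finType, (X -> Y) -> Prop :=
| sp_id (X : finType) : subsys_perm (fun x : X => x)
| sp_swap (X Y : finType) :
    subsys_perm (fun p : (X * Y)%type => (p.2, p.1))
| sp_assoc (X Y Z : finType) :
    subsys_perm (fun p : ((X * Y) * Z)%type => (p.1.1, (p.1.2, p.2)))
| sp_assocV (X Y Z : finType) :
    subsys_perm (fun p : (X * (Y * Z))%type => ((p.1, p.2.1), p.2.2))
| sp_prod (X Y X' Y' : finType) (f : X -> Y) (g : X' -> Y') :
    subsys_perm f -> subsys_perm g ->
    subsys_perm (fun p : (X * X')%type => (f p.1, g p.2))
| sp_comp (X Y Z : finType) (f : X -> Y) (g : Y -> Z) :
    subsys_perm f -> subsys_perm g -> subsys_perm (fun x : X => g (f x)).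

Definition free_family (R : realType) :=
  forall T : finType, op R T -> Prop.

Definition free_states_ok {R : realType} (F : free_family R) : Prop :=
  [/\ (forall (T : finType) (rho : op R T), F T rho -> density rho),
      (forall (A B : finType) (rho : op R A) (sigma : op R B),
          F A rho -> F B sigma -> F (A * B)%type (tensor rho sigma)),
      (forall (A B : finType) (rho : op R (A * B)%type),
          F (A * B)%type rho -> F A (ptr2 rho) /\ F B (ptr1 rho)) &
      (forall (X Y : finType) (f : X -> Y) (rho : op R X),
          subsys_perm f -> F X rho -> F Y (relabel f rho))].

Definition oplinear {R : realType} {A B : finType} (M : op R A -> op R B)
  : Prop :=
  forall (c : R[i]) (X Y : op R A), M (c *: X + Y) = c *: M X + M Y.

Definition partensor {R : realType} {A B C D : finType}
  (M : op R A -> op R B) (N : op R C -> op R D) (X : op R (A * C)%type)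
  : op R (B * D)%type :=
  \sum_(a : A) \sum_(a' : A) \sum_(c : C) \sum_(c' : C)
     X ((a, c), (a', c')) *: tensor (M (eop a a')) (N (eop c c')).

Definition channel {R : realType} {A B : finType} (M : op R A -> op R B)
  : Prop :=
  [/\ oplinear M,
      (forall X : op R A, optr (M X) = optr X) &
      (forall (E : finType) (X : op R (A * E)%type),
          psd X -> psd (partensor M (@id (op R E)) X))].

(* Choi matrix M_{B:A'} = (M (x) I_{A'})(Phi_{AA'}) and its renormalization *)
Definition choi {R : realType} {A B : finType} (M : op R A -> op R B)
  : op R (B * A)%type :=
  \sum_(x : A) \sum_(y : A) tensor (M (eop x y)) (eop x y).

Definition rchoi {R : realType} {A B : finType} (M : op R A -> op R B)
  : op R (B * A)%type :=
  (#|A|%:R)^-1 *: choi M.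

Definition CD {R : realType} (F : free_family R) {A B : finType}
  (M : op R A -> op R B) : Prop :=
  F (B * A)%type (rchoi M).

Definition CD_resource_theory {R : realType} (F : free_family R) : Prop :=
  [/\
      (forall A : finType, (0 < #|A|)%N -> CD F (@id (op R A))),
      (forall A B : finType, (0 < #|A|)%N -> (0 < #|B|)%N ->
          CD F (relabel (R := R) (fun p : A * B => (p.2, p.1)))),
      (forall A B : finType, (0 < #|A|)%N -> (0 < #|B|)%N ->
          CD F (@ptr1 R A B)),
      (forall (A B C : finType) (M : op R A -> op R B) (N : op R B -> op R C),
          channel M -> channel N -> CD F M -> CD F N -> CD F (N \o M)) &
      (forall (A B C D : finType) (M : op R A -> op R B)
              (N : op R C -> op R D),
          channel M -> channel N -> CD F M -> CD F N ->
          CD F (partensor M N))].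

Definition link_state {R : realType} {A B : finType}
  (mu : op R (B * A)%type) (rho : op R A) : op R B :=
  ptr2 (opmul mu (tensor idop (optrans rho))).

(* Main.v *)
Require Import Defs.
From HB Require Import structures.
From mathcomp Require Import all_boot all_order all_algebra.
From mathcomp Require Import complex reals.
From mathcomp Require Import spectral sesquilinear.
From mathcomp Require Import ring.
Import Order.TTheory GRing.Theory Num.Theory.
Local Open Scope ring_scope.
Set Implicit Arguments.
Unset Strict Implicit.

Section Psd.
Variable R : realType.
Local Notation C := (R[i]).

Lemma sum_deltal (T : finType) (x : T) (f : T -> C) :
  \sum_z ((z == x)%:R * f z) = f x.
Proof.
rewrite (bigD1 x) //= eqxx mul1r big1 ?addr0 // => z /negbTE ->; by rewrite mul0r.
Qed.

Lemma sum_deltar (T : finType) (x : T) (f : T -> C) :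
  \sum_z (f z * (z == x)%:R) = f x.
Proof.
rewrite (bigD1 x) //= eqxx mulr1 big1 ?addr0 // => z /negbTE ->; by rewrite mulr0.
Qed.

Definition qf (T : finType) (X : op R T) (v : T -> C) :=
  \sum_(x : T) \sum_(y : T) (v x)^* * X (x, y) * v y.

Lemma dd (T : finType) (X : op R T) (x y : T) (c d : C) :
  \sum_i \sum_j ((i == x)%:R * c * X (i, j) * ((j == y)%:R * d)) = c * X (x, y) * d.
Proof.
rewrite (eq_bigr (fun i => (i == x)%:R * \sum_j ((c * X (i, j) * d) * (j == y)%:R))).
  by rewrite sum_deltal sum_deltar.
move=> i _; rewrite mulr_sumr; apply: eq_bigr => j _; ring.
Qed.

Lemma qf2 (T : finType) (X : op R T) (x y : T) (a b : C) :
  qf X (fun z => (z == x)%:R * a + (z == y)%:R * b) =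
  a^* * X (x, x) * a + a^* * X (x, y) * b + b^* * X (y, x) * a + b^* * X (y, y) * b.
Proof.
rewrite /qf.
under eq_bigr => z _.
  under eq_bigr => w _ do rewrite rmorphD !rmorphM /= !conjC_nat !mulrDl !mulrDr.
  rewrite !big_split /=.
  over.
by rewrite !big_split /= !dd !addrA.
Qed.

Lemma psd_herm (T : finType) (X : op R T) : psd X ->
  forall x y, X (y, x) = (X (x, y))^*.
Proof.
move=> H x y.
have real_of : forall a b, (qf X (fun z => (z == x)%:R * a + (z == y)%:R * b))^* =
     qf X (fun z => (z == x)%:R * a + (z == y)%:R * b).
  move=> a b; apply/eqP; rewrite -CrealE; apply: ger0_real; exact: H.
have h1 := real_of 1 0.
have h2 := real_of 0 1.
have h3 := real_of 1 1.
have h4 := real_of 1 'i.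
rewrite !qf2 in h1 h2 h3 h4.
rewrite !conjC0 !conjC1 !mul0r !mulr0 !mul1r !mulr1 !addr0 !add0r in h1 h2 h3 h4.
move: h3 h4; rewrite !rmorphD /= h1 h2.
rewrite !rmorphM /= !conjCK h2 conjCi.
set a := X (x, y); set b := X (y, x); set p := X (x, x); set q := X (y, y).
move=> /eqP; rewrite -subr_eq0 => /eqP h3.
move=> /eqP; rewrite -subr_eq0 => /eqP h4.
match goal with h3 : ?E3 = 0, h4 : ?E4 = 0 |- _ =>
  have E : (2:C) * (a^* - b) = E3 + 'i * E4 + (1 + 'i * 'i) * (a^* - b^* + a - b) by ring end.
rewrite h3 h4 mulr0 addr0 -expr2 sqrCi addrN mul0r addr0 in E.
apply/eqP; rewrite eq_sym -subr_eq0; apply/eqP.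
by move/eqP: E; rewrite mulf_eq0 pnatr_eq0 /= => /eqP.
Qed.

Local Open Scope sesquilinear_scope.

Lemma sum_enum (T : finType) (f : T -> C) :
  \sum_(x : T) f x = \sum_(i < #|T|) f (enum_val i).
Proof. exact: (big_enum_val (A := predT)). Qed.

Lemma psd_decomp (T : finType) (X : op R T) : psd X ->
  exists (d : 'I_#|T| -> C) (u : 'I_#|T| -> T -> C),
    (forall k, 0 <= d k) /\ forall x y, X (x, y) = \sum_k d k * u k x * (u k y)^*.
Proof.
move=> H.
pose A : 'M[C]_#|T| := \matrix_(i, j) X (enum_val i, enum_val j).
have Aherm : A \is hermsymmx.
  apply/is_hermitianmxP; rewrite expr0 scale1r; apply/matrixP => i j.
  by rewrite !mxE (psd_herm H).
have /orthomx_spectralP := hermitian_normalmx Aherm.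
set P := spectralmx A; set D := spectral_diag A => AE.
have Pu : P \is unitarymx by exact: spectral_unitarymx.
rewrite invmx_unitary // in AE.
have Aij : forall i j, A i j = \sum_k D 0 k * (P k i)^* * P k j.
  move=> i j; rewrite AE mul_mx_diag !mxE; apply: eq_bigr => k _; rewrite !mxE; ring.
exists (fun k => D 0 k), (fun k x => (P k (enum_rank x))^*); split; last first.
  move=> x y; have -> : X (x, y) = A (enum_rank x) (enum_rank y) by rewrite mxE !enum_rankK.
  rewrite Aij.
  by apply: eq_bigr => k _; rewrite conjCK.
move=> k.
have Dk : D 0 k = (P *m A *m P^t*) k k.
  rewrite AE !mulmxA; have /unitarymxP -> := Pu.
  by rewrite mul1mx mulmxtVK // mxE eqxx mulr1n.
rewrite Dk.
have := H (fun x => (P k (enum_rank x))^*).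
congr (_ <= _).
have E : (P *m A *m P^t*) k k = \sum_i \sum_j P k i * A i j * (P k j)^*.
  rewrite !mxE; under eq_bigr => j _ do rewrite !mxE mulr_suml.
  rewrite exchange_big /=; apply: eq_bigr => i _; apply: eq_bigr => j _.
  by rewrite !mxE.
rewrite E sum_enum; apply: eq_bigr => i _.
rewrite sum_enum; apply: eq_bigr => j _.
by rewrite !mxE !enum_valK conjCK.
Qed.

Lemma psd_pair (S T : finType) (Y : op R S) (X : op R T) (w : S -> T -> C) :
  psd Y -> psd X ->
  0 <= \sum_s \sum_t \sum_s' \sum_t' (w s t)^* * Y (s, s') * X (t, t') * w s' t'.
Proof.
move=> HY HX.
have [d [u [d0 Yd]]] := psd_decomp HY.
pose F k s t s' t' := d k * (u k s * (w s t)^*) * X (t, t') * ((u k s')^* * w s' t').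
have -> : \sum_s \sum_t \sum_s' \sum_t' (w s t)^* * Y (s, s') * X (t, t') * w s' t'
   = \sum_s \sum_t \sum_s' \sum_t' \sum_k F k s t s' t'.
  apply: eq_bigr => s _; apply: eq_bigr => t _; apply: eq_bigr => s' _; apply: eq_bigr => t' _.
  rewrite Yd mulr_sumr !mulr_suml; apply: eq_bigr => k _; rewrite /F; ring.
under eq_bigr do under eq_bigr do under eq_bigr do rewrite exchange_big.
under eq_bigr do under eq_bigr do rewrite exchange_big.
under eq_bigr do rewrite exchange_big.
rewrite exchange_big /=.
apply: sumr_ge0 => k _.
have -> : \sum_s \sum_t \sum_s' \sum_t' F k s t s' t' =
   d k * qf X (fun t => \sum_s (u k s)^* * w s t).
  rewrite /qf mulr_sumr.
  have -> : \sum_s \sum_t \sum_s' \sum_t' F k s t s' t' = \sum_t \sum_t' \sum_s \sum_s' F k s t s' t'.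
    rewrite exchange_big /=; apply: eq_bigr => t _.
    symmetry; rewrite exchange_big /=; apply: eq_bigr => s _; by rewrite exchange_big.
  apply: eq_bigr => t _; rewrite mulr_sumr; apply: eq_bigr => t' _.
  rewrite rmorph_sum !mulr_suml mulr_sumr; apply: eq_bigr => s _.
  rewrite mulr_sumr !mulr_sumr; apply: eq_bigr => s' _.
  by rewrite /F rmorphM /= conjCK; ring.
by apply: mulr_ge0; [exact: d0 | exact: HX].
Qed.

Lemma scE (T : finType) (c : C) (X : op R T) p : (c *: X) p = c * X p.
Proof. by rewrite ffunE. Qed.

Lemma addE (T : finType) (X Y : op R T) p : (X + Y) p = X p + Y p.
Proof. by rewrite ffunE. Qed.

Lemma tensorE (A B : finType) (X : op R A) (Y : op R B) a b a' b' :
  tensor X Y ((a, b), (a', b')) = X (a, a') * Y (b, b').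
Proof. by rewrite ffunE. Qed.

Lemma eopE (T : finType) (x y a b : T) :
  (eop x y : op R T) (a, b) = (a == x)%:R * (b == y)%:R.
Proof. by rewrite ffunE /= -natrM mulnb. Qed.

Lemma idopE (T : finType) (a b : T) : (idop : op R T) (a, b) = (a == b)%:R.
Proof. by rewrite ffunE. Qed.

Lemma ptr1E (A B : finType) (X : op R (A * B)%type) b b' :
  ptr1 X (b, b') = \sum_a X ((a, b), (a, b')).
Proof. by rewrite ffunE. Qed.

Lemma ptr2E (A B : finType) (X : op R (A * B)%type) a a' :
  ptr2 X (a, a') = \sum_b X ((a, b), (a', b)).
Proof. by rewrite ffunE. Qed.

Lemma sum_only (T : finType) (x : T) (f : T -> C) :
  (forall y, y != x -> f y = 0) -> \sum_y f y = f x.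
Proof.
move=> H; rewrite (bigD1 x) //= big1 ?addr0 // => y; exact: H.
Qed.

Lemma ffun_ext2 (T : finType) (X Y : op R T) :
  (forall a b, X (a, b) = Y (a, b)) -> X = Y.
Proof. by move=> H; apply/ffunP => -[a b]; exact: H. Qed.

Lemma sum_pair (A B : finType) (G : (A * B)%type -> C) :
  \sum_p G p = \sum_a \sum_b G (a, b).
Proof. by rewrite (pair_bigA _ (fun a b => G (a, b))); apply: eq_bigr => -[a b]. Qed.

Lemma psd_tensor (A B : finType) (X : op R A) (Y : op R B) :
  psd X -> psd Y -> psd (tensor X Y).
Proof.
move=> HX HY v; rewrite /psd.
rewrite sum_pair.
have := psd_pair (fun s t => v (s, t)) HX HY.
congr (_ <= _); apply: eq_bigr => a _; apply: eq_bigr => b _.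
rewrite sum_pair; apply: eq_bigr => a' _; apply: eq_bigr => b' _.
by rewrite tensorE !mulrA.
Qed.

Lemma psd_ptr1 (A B : finType) (X : op R (A * B)%type) :
  psd X -> psd (ptr1 X).
Proof.
move=> HX v.
have -> : \sum_b \sum_b' (v b)^* * ptr1 X (b, b') * v b' =
   \sum_a qf X (fun p => (p.1 == a)%:R * v p.2).
  rewrite /qf.
  have -> : \sum_b \sum_b' (v b)^* * ptr1 X (b, b') * v b' =
     \sum_a \sum_b \sum_b' (v b)^* * X ((a, b), (a, b')) * v b'.
    under eq_bigr do under eq_bigr do rewrite ptr1E mulr_sumr mulr_suml.
    under eq_bigr do rewrite exchange_big.
    by rewrite exchange_big.
  apply: eq_bigr => a _.
  rewrite sum_pair (sum_only (x:=a)) => [|a2 ha2]; last first.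
    apply: big1 => b _; rewrite sum_pair big1 // => a3 _; apply: big1 => b3 _.
    by rewrite (negbTE ha2) rmorphM /= conjC0 !mul0r.
  apply: eq_bigr => b _; rewrite sum_pair (sum_only (x:=a)) => [|a2 ha2]; last first.
    by apply: big1 => b3 _; rewrite (negbTE ha2) mul0r mulr0.
  apply: eq_bigr => b' _; by rewrite !eqxx rmorphM /= conjC1 !mul1r.
apply: sumr_ge0 => a _; exact: HX.
Qed.

Lemma neqF (T : eqType) (x y : T) : y != x -> (x == y) = false.
Proof. by rewrite eq_sym => /negbTE. Qed.

Lemma choiE (A B : finType) (M : op R A -> op R B) b a b' a' :
  choi M ((b, a), (b', a')) = M (eop a a') (b, b').
Proof.
rewrite /choi sum_ffunE (sum_only (x:=a)) => [|y hy]; last first.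
  rewrite sum_ffunE; apply: big1 => z _; by rewrite tensorE eopE ?(negbTE hy) ?(neqF hy) mul0r mulr0.
rewrite sum_ffunE (sum_only (x:=a')) => [|y hy]; last first.
  by rewrite tensorE eopE ?(negbTE hy) ?(neqF hy) mulr0 mulr0.
by rewrite tensorE eopE !eqxx mulr1 mulr1.
Qed.

Lemma rchoiE (A B : finType) (M : op R A -> op R B) b a b' a' :
  rchoi M ((b, a), (b', a')) = (#|A|%:R)^-1 * M (eop a a') (b, b').
Proof. by rewrite /rchoi scE choiE. Qed.

Lemma PhiE (A : finType) b a b' a' :
  (Phi : op R (A * A)%type) ((b, a), (b', a')) = (b == a)%:R * (b' == a')%:R.
Proof. by rewrite -eopE -(choiE (@id (op R A))). Qed.

Lemma partensorE (A B C' D : finType) (M : op R A -> op R B) (N : op R C' -> op R D)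
  (X : op R (A * C')%type) b d b' d' :
  partensor M N X ((b, d), (b', d')) =
  \sum_a \sum_a' \sum_c \sum_c' X ((a, c), (a', c')) * (M (eop a a') (b, b') * N (eop c c') (d, d')).
Proof.
rewrite /partensor sum_ffunE; apply: eq_bigr => a _.
rewrite sum_ffunE; apply: eq_bigr => a' _.
rewrite sum_ffunE; apply: eq_bigr => c _.
rewrite sum_ffunE; apply: eq_bigr => c' _.
by rewrite scE tensorE.
Qed.

Lemma partensor_idE (A B E : finType) (M : op R A -> op R B) (X : op R (A * E)%type) b e b' e' :
  partensor M id X ((b, e), (b', e')) =
  \sum_a \sum_a' X ((a, e), (a', e')) * M (eop a a') (b, b').
Proof.
rewrite partensorE; apply: eq_bigr => a _; apply: eq_bigr => a' _.
rewrite (sum_only (x:=e)) => [|y hy]; last first.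
  by apply: big1 => z _; rewrite /= eopE ?(negbTE hy) ?(neqF hy) mul0r !mulr0.
rewrite (sum_only (x:=e')) => [|y hy]; last first.
  by rewrite /= eopE ?(negbTE hy) ?(neqF hy) !mulr0.
by rewrite /= eopE !eqxx mulr1 mulr1.
Qed.

Lemma partensor_eop (A B C' D : finType) (M : op R A -> op R B) (N : op R C' -> op R D) a c a' c' :
  partensor M N (eop (a, c) (a', c')) = tensor (M (eop a a')) (N (eop c c')).
Proof.
apply: ffun_ext2 => -[b d] [b' d']; rewrite partensorE tensorE.
rewrite (sum_only (x:=a)) => [|y hy]; last first.
  apply: big1 => ? _; apply: big1 => ? _; apply: big1 => ? _.
  by rewrite eopE /= !xpair_eqE (negbTE hy) ?andbF ?andFb /= ?mul0r ?mulr0 ?mul0r.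
rewrite (sum_only (x:=a')) => [|y hy]; last first.
  apply: big1 => ? _; apply: big1 => ? _.
  by rewrite eopE /= !xpair_eqE (negbTE hy) ?andbF ?andFb /= ?mul0r ?mulr0 ?mul0r.
rewrite (sum_only (x:=c)) => [|y hy]; last first.
  apply: big1 => ? _.
  by rewrite eopE /= !xpair_eqE (negbTE hy) ?andbF ?andFb /= ?mul0r ?mulr0 ?mul0r.
rewrite (sum_only (x:=c')) => [|y hy]; last first.
  by rewrite eopE /= !xpair_eqE (negbTE hy) ?andbF ?andFb /= ?mul0r ?mulr0 ?mul0r.
by rewrite eopE /= !xpair_eqE !eqxx /= mul1r mul1r.
Qed.

Lemma linkE (A B : finType) (mu : op R (B * A)%type) (X : op R A) b b' :
  link_state mu X (b, b') = \sum_x \sum_y mu ((b, x), (b', y)) * X (x, y).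
Proof.
rewrite /link_state ptr2E; apply: eq_bigr => x _.
rewrite ffunE /= sum_pair (sum_only (x:=b')) => [|k hk]; last first.
  by apply: big1 => y _; rewrite tensorE idopE (negbTE hk) mul0r mulr0.
by apply: eq_bigr => y _; rewrite tensorE idopE eqxx mul1r ffunE.
Qed.

Lemma optr_eop (A : finType) (a a' : A) : optr (eop a a' : op R A) = (a == a')%:R.
Proof.
rewrite /optr (sum_only (x:=a)) => [|y hy]; last by rewrite eopE (negbTE hy) mul0r.
by rewrite eopE eqxx mul1r eq_sym.
Qed.

Definition Mmu (A B : finType) (mu : op R (B * A)%type) : op R A -> op R B :=
  fun X => #|A|%:R *: link_state mu X.

Definition prep (A : finType) (rho : op R A) : op R A -> op R A :=
  fun X => optr X *: rho.

Lemma MmuE (A B : finType) (mu : op R (B * A)%type) X b b' :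
  Mmu mu X (b, b') = #|A|%:R * \sum_x \sum_y mu ((b, x), (b', y)) * X (x, y).
Proof. by rewrite /Mmu scE linkE. Qed.

Lemma Mmu_eop (A B : finType) (mu : op R (B * A)%type) a a' b b' :
  Mmu mu (eop a a') (b, b') = #|A|%:R * mu ((b, a), (b', a')).
Proof.
rewrite MmuE (sum_only (x:=a)) => [|y hy]; last first.
  by apply: big1 => z _; rewrite eopE ?(negbTE hy) ?(neqF hy) mul0r mulr0.
rewrite (sum_only (x:=a')) => [|y hy]; last first.
  by rewrite eopE ?(negbTE hy) ?(neqF hy) mulr0 mulr0.
by rewrite eopE !eqxx mulr1 mulr1.
Qed.

Lemma card_neq0 (A : finType) : (0 < #|A|)%N -> (#|A|%:R : C) != 0.
Proof. by move=> h; rewrite pnatr_eq0 -lt0n. Qed.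

Lemma rchoi_Mmu (A B : finType) (mu : op R (B * A)%type) :
  (0 < #|A|)%N -> rchoi (Mmu mu) = mu.
Proof.
move=> hA; apply: ffun_ext2 => -[b a] [b' a'].
by rewrite rchoiE Mmu_eop mulrA mulVf ?card_neq0 // mul1r.
Qed.

Lemma Mmu_lin (A B : finType) (mu : op R (B * A)%type) : oplinear (Mmu mu).
Proof.
move=> c X Y; apply: ffun_ext2 => b b'.
rewrite [LHS]MmuE [RHS]addE [in RHS]scE !MmuE.
rewrite !mulr_sumr -big_split; apply: eq_bigr => x _.
rewrite !mulr_sumr -big_split; apply: eq_bigr => y _.
rewrite addE scE /=; ring.
Qed.

Lemma Mmu_tp (A B : finType) (mu : op R (B * A)%type) :
  (0 < #|A|)%N -> ptr1 mu = (#|A|%:R)^-1 *: idop ->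
  forall X, optr (Mmu mu X) = optr X.
Proof.
move=> hA hmu X; rewrite /optr.
under eq_bigr do rewrite MmuE.
rewrite -mulr_sumr exchange_big /=.
under eq_bigr do rewrite exchange_big /=.
have E : forall x y, \sum_b mu ((b, x), (b, y)) * X (x, y) = (#|A|%:R)^-1 * (x == y)%:R * X (x, y).
  move=> x y; rewrite -mulr_suml; congr (_ * _).
  by rewrite -ptr1E hmu scE idopE.
under eq_bigr do under eq_bigr do rewrite E.
rewrite mulr_sumr; apply: eq_bigr => x _.
rewrite (sum_only (x:=x)) => [|y hy]; last by rewrite ?(negbTE hy) ?(neqF hy) ?mulr0 ?mul0r ?mulr0.
by rewrite eqxx mulr1 mulrA mulfV ?card_neq0 // mul1r.
Qed.

Lemma Mmu_cp (A B : finType) (mu : op R (B * A)%type) : psd mu ->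
  forall (E : finType) (X : op R (A * E)%type), psd X -> psd (partensor (Mmu mu) (@id (op R E)) X).
Proof.
move=> Hmu E X HX v.
have Hmu' : psd (#|A|%:R *: mu).
  move=> w; rewrite (eq_bigr (fun x => #|A|%:R * \sum_y (w x)^* * mu (x, y) * w y)).
    by rewrite -mulr_sumr; apply: mulr_ge0 => //; exact: Hmu.
  by move=> x _; rewrite mulr_sumr; apply: eq_bigr => y _; rewrite scE; ring.
have := psd_pair (fun (s : (B * A)%type) (t : (A * E)%type) => (t.1 == s.2)%:R * v (s.1, t.2)) Hmu' HX.
pose G b a e b' a' e' := (v (b, e))^* * (#|A|%:R * mu ((b, a), (b', a'))) * X ((a, e), (a', e')) * v (b', e').
have -> : \sum_s \sum_t \sum_s' \sum_t'
   (((t.1 == s.2)%:R * v (s.1, t.2))^* * (#|A|%:R *: mu) (s, s') * X (t, t') * ((t'.1 == s'.2)%:R * v (s'.1, t'.2)))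
   = \sum_b \sum_a \sum_e \sum_b' \sum_a' \sum_e' G b a e b' a' e'.
  rewrite sum_pair; apply: eq_bigr => b _; apply: eq_bigr => a _.
  rewrite sum_pair (sum_only (x:=a)) => [|a2 ha2]; last first.
    apply: big1 => e _; apply: big1 => s' _; apply: big1 => t' _.
    by rewrite /= (negbTE ha2) rmorphM /= conjC0 !mul0r.
  apply: eq_bigr => e _; rewrite sum_pair; apply: eq_bigr => b' _; apply: eq_bigr => a' _.
  rewrite sum_pair (sum_only (x:=a')) => [|a2 ha2]; last first.
    by apply: big1 => e' _; rewrite /= (negbTE ha2) !mul0r mulr0.
  apply: eq_bigr => e' _.
  by rewrite /= !eqxx rmorphM /= conjC1 !mul1r scE /G.
congr (_ <= _).
rewrite [RHS]sum_pair; apply: eq_bigr => b _.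
rewrite exchange_big /=; apply: eq_bigr => e _.
rewrite sum_pair exchange_big /=; apply: eq_bigr => b' _.
under eq_bigr do rewrite exchange_big /=.
rewrite exchange_big /=; apply: eq_bigr => e' _.
rewrite partensor_idE mulr_sumr mulr_suml; apply: eq_bigr => a _.
rewrite mulr_sumr mulr_suml; apply: eq_bigr => a' _.
by rewrite Mmu_eop /G; ring.
Qed.

Lemma optr_lin (A : finType) (c : C) (X Y : op R A) : optr (c *: X + Y) = c * optr X + optr Y.
Proof.
rewrite /optr mulr_sumr -big_split; apply: eq_bigr => x _; by rewrite addE scE.
Qed.

Lemma optr_scale (A : finType) (c : C) (X : op R A) : optr (c *: X) = c * optr X.
Proof. rewrite /optr mulr_sumr; apply: eq_bigr => x _; by rewrite scE. Qed.

Lemma prep_channel (A : finType) (rho : op R A) : density rho -> channel (prep rho).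
Proof.
move=> [Hpsd Htr]; split.
- move=> c X Y; by rewrite /prep optr_lin scalerDl scalerA.
- by move=> X; rewrite /prep optr_scale Htr mulr1.
- move=> E X HX.
  have -> : partensor (prep rho) id X = tensor rho (ptr1 X).
    apply: ffun_ext2 => -[b e] [b' e'].
    rewrite partensor_idE tensorE ptr1E mulr_sumr; apply: eq_bigr => a _.
    rewrite (sum_only (x:=a)) => [|y hy]; last by rewrite /prep scE optr_eop ?(negbTE hy) ?(neqF hy) mul0r mulr0.
    by rewrite /prep scE optr_eop eqxx mul1r mulrC.
  apply: psd_tensor => //; exact: psd_ptr1.
Qed.

Lemma rchoi_prep (A : finType) (rho : op R A) :
  rchoi (prep rho) = tensor rho ((#|A|%:R)^-1 *: idop).
Proof.
apply: ffun_ext2 => -[b a] [b' a'].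
by rewrite rchoiE tensorE /prep !scE optr_eop idopE; ring.
Qed.

Lemma rchoi_comp (A B : finType) (mu : op R (B * A)%type) (rho : op R A) :
  rchoi (Mmu mu \o prep rho) = tensor (Mmu mu rho) ((#|A|%:R)^-1 *: idop).
Proof.
apply: ffun_ext2 => -[b a] [b' a'].
rewrite rchoiE tensorE /= !MmuE scE idopE /prep.
have -> : \sum_x \sum_y mu ((b, x), (b', y)) * (optr (eop a a') *: rho) (x, y) =
   optr (eop a a' : op R A) * \sum_x \sum_y mu ((b, x), (b', y)) * rho (x, y).
  rewrite mulr_sumr; apply: eq_bigr => x _; rewrite mulr_sumr; apply: eq_bigr => y _.
  rewrite scE; ring.
rewrite optr_eop; ring.
Qed.

Lemma ptr2_tensor_id (A B : finType) (Z : op R B) : (0 < #|A|)%N ->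
  ptr2 (tensor Z ((#|A|%:R)^-1 *: (idop : op R A))) = Z.
Proof.
move=> hA; apply: ffun_ext2 => b b'.
rewrite ptr2E.
under eq_bigr do rewrite tensorE scE idopE eqxx mulr1.
by rewrite sumr_const cardT -cardE -[_ *+ #|A|]mulr_natr divfK ?card_neq0.
Qed.

Lemma density_card (A : finType) (rho : op R A) : density rho -> (0 < #|A|)%N.
Proof.
move=> [_ Htr]; rewrite lt0n; apply/negP => /eqP h0.
have : optr rho = 0.
  by rewrite /optr big1 // => x _; have := card0_eq h0 x; rewrite !inE.
by rewrite Htr => /eqP; rewrite oner_eq0.
Qed.

Lemma ptr2_Phi (A : finType) :
  ptr2 ((#|A|%:R)^-1 *: (Phi : op R (A * A)%type)) = (#|A|%:R)^-1 *: idop.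
Proof.
apply: ffun_ext2 => x y; rewrite ptr2E scE idopE.
rewrite (sum_only (x:=x)) => [|a ha]; last by rewrite scE PhiE ?(negbTE ha) ?(neqF ha) mul0r mulr0.
by rewrite scE PhiE eqxx mul1r eq_sym.
Qed.

Lemma forward (F : free_family R) : free_states_ok F -> CD_resource_theory F ->
   ((forall A : finType, (0 < #|A|)%N ->
       F (A * A)%type ((#|A|%:R)^-1 *: (@Phi R A))) /\
    (forall (A B : finType) (rho : op R A) (mu : op R (B * A)%type),
       F A rho -> F (B * A)%type mu ->
       ptr1 mu = (#|A|%:R)^-1 *: idop ->
       F B (#|A|%:R *: link_state mu rho))).
Proof.
move=> [Hden Hten Hptr Hperm] [Hid Hswap Hdis Hseq Hpar].
have H1 : forall A : finType, (0 < #|A|)%N -> F (A * A)%type ((#|A|%:R)^-1 *: (@Phi R A)).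
  move=> A hA; exact: (Hid A hA).
split => // A B rho mu Frho Fmu hmu.
have hA := density_card (Hden _ _ Frho).
have Fid : F A ((#|A|%:R)^-1 *: idop).
  rewrite -ptr2_Phi; exact: (Hptr _ _ _ (H1 A hA)).1.
have CDprep : CD F (prep rho).
  by rewrite /CD rchoi_prep; apply: Hten.
have CDM : CD F (Mmu mu) by rewrite /CD rchoi_Mmu.
have chM : channel (Mmu mu).
  split; [exact: Mmu_lin | exact: Mmu_tp | apply: Mmu_cp].
  by have [] := Hden _ _ Fmu.
have := Hseq _ _ _ _ _ (prep_channel (Hden _ _ Frho)) chM CDprep CDM.
rewrite /CD rchoi_comp => /Hptr [+ _].
by rewrite ptr2_tensor_id.
Qed.

Lemma relabel_bij (X Y : finType) (f : X -> Y) (g : Y -> X) (M : op R X) :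
  cancel f g -> cancel g f -> forall y y', relabel f M (y, y') = M (g y, g y').
Proof.
move=> fK gK y y'; rewrite ffunE /=.
rewrite (sum_only (x:=g y)) => [|x hx]; last first.
  apply: big1 => x' _; have -> : (f x == y) = false.
    by apply/negbTE; apply: contra hx => /eqP <-; rewrite fK.
  by rewrite mul0r.
rewrite (sum_only (x:=g y')) => [|x hx]; last first.
  have -> : (f x == y') = false.
    by apply/negbTE; apply: contra hx => /eqP <-; rewrite fK.
  by rewrite andbF mul0r.
by rewrite !gK !eqxx mul1r.
Qed.

Lemma F_relabel (F : free_family R) (X Y : finType) (f : X -> Y) (g : Y -> X)
  (rho : op R X) (sigma : op R Y) :
  free_states_ok F -> subsys_perm f -> F X rho -> cancel f g -> cancel g f ->
  (forall y y', sigma (y, y') = rho (g y, g y')) -> F Y sigma.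
Proof.
move=> [_ _ _ Hperm] Hf Hrho fK gK E.
have -> : sigma = relabel f rho.
  by apply: ffun_ext2 => y y'; rewrite E (relabel_bij _ fK gK).
exact: Hperm.
Qed.

Lemma sp_mid (X Y Z W : finType) :
  subsys_perm (fun p : ((X * Y) * (Z * W))%type => ((p.1.1, p.2.1), (p.1.2, p.2.2))).
Proof.
exact: (sp_comp (sp_comp (sp_comp (sp_comp (sp_assoc X Y (Z * W)%type)
   (sp_prod (sp_id X) (sp_assocV Y Z W))) (sp_prod (sp_id X) (sp_prod (sp_swap Y Z) (sp_id W))))
   (sp_prod (sp_id X) (sp_assoc Z Y W))) (sp_assocV X Z (Y * W)%type)).
Qed.

Lemma natb_and (x y : bool) : ((x && y)%:R : C) = x%:R * y%:R.
Proof. by rewrite -natrM mulnb. Qed.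

Lemma card_prodC (A B : finType) : (#|{: A * B}|%:R : C) = #|A|%:R * #|B|%:R.
Proof. by rewrite card_prod natrM. Qed.

Lemma oplin0 (A B : finType) (N : op R A -> op R B) : oplinear N -> N 0 = 0.
Proof.
move=> HN; have := HN 1 0 0; rewrite scaler0 addr0 scale1r -{1}[N 0]addr0.
by move=> /addrI /esym.
Qed.

Lemma oplinZ (A B : finType) (N : op R A -> op R B) : oplinear N -> forall c X, N (c *: X) = c *: N X.
Proof. by move=> HN c X; have := HN c X 0; rewrite !addr0 oplin0 // addr0. Qed.

Lemma oplinD (A B : finType) (N : op R A -> op R B) : oplinear N -> forall X Y, N (X + Y) = N X + N Y.
Proof. by move=> HN X Y; have := HN 1 X Y; rewrite !scale1r. Qed.

Lemma op_expand (A : finType) (Y : op R A) : Y = \sum_b \sum_b' Y (b, b') *: eop b b'.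
Proof.
apply: ffun_ext2 => x y; rewrite sum_ffunE (sum_only (x:=x)) => [|b hb]; last first.
  by rewrite sum_ffunE; apply: big1 => b' _; rewrite scE eopE ?(negbTE hb) ?(neqF hb) mul0r mulr0.
rewrite sum_ffunE (sum_only (x:=y)) => [|b hb]; last first.
  by rewrite scE eopE ?(negbTE hb) ?(neqF hb) mulr0 mulr0.
by rewrite scE eopE !eqxx mulr1 mulr1.
Qed.

Lemma lin_expand (A B : finType) (N : op R A -> op R B) (Y : op R A) c c' :
  oplinear N -> N Y (c, c') = \sum_b \sum_b' Y (b, b') * N (eop b b') (c, c').
Proof.
move=> HN; rewrite {1}(op_expand Y).
rewrite (big_morph N (oplinD HN) (oplin0 HN)) sum_ffunE; apply: eq_bigr => b _.
rewrite (big_morph N (oplinD HN) (oplin0 HN)) sum_ffunE; apply: eq_bigr => b' _.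
by rewrite oplinZ // scE.
Qed.

Lemma ptr1_rchoi (A B : finType) (N : op R A -> op R B) :
  (forall X, optr (N X) = optr X) -> ptr1 (rchoi N) = (#|A|%:R)^-1 *: idop.
Proof.
move=> HN; apply: ffun_ext2 => a a'; rewrite ptr1E scE idopE.
under eq_bigr do rewrite rchoiE.
by rewrite -mulr_sumr -[\sum_b _]/(optr (N (eop a a'))) HN optr_eop.
Qed.

Lemma backward (F : free_family R) : free_states_ok F ->
   ((forall A : finType, (0 < #|A|)%N ->
       F (A * A)%type ((#|A|%:R)^-1 *: (@Phi R A))) /\
    (forall (A B : finType) (rho : op R A) (mu : op R (B * A)%type),
       F A rho -> F (B * A)%type mu ->
       ptr1 mu = (#|A|%:R)^-1 *: idop ->
       F B (#|A|%:R *: link_state mu rho))) -> CD_resource_theory F.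
Proof.
move=> Hok [H1 H2]; have [Hden Hten Hptr Hperm] := Hok.
have Fid : forall A : finType, (0 < #|A|)%N -> F A ((#|A|%:R)^-1 *: idop).
  move=> A hA; rewrite -ptr2_Phi; exact: (Hptr _ _ _ (H1 A hA)).1.
split.
- move=> A hA; exact: (H1 A hA).
-
  move=> A B hA hB.
  have Ht := Hten _ _ _ _ (H1 A hA) (H1 B hB).
  apply: (F_relabel Hok (sp_comp (sp_mid A A B B) (sp_prod (sp_swap A B) (sp_id (A * B)%type))) Ht
     (g := fun p : ((B * A) * (A * B))%type => ((p.1.2, p.2.1), (p.1.1, p.2.2)))).
  + by move=> [[? ?] [? ?]].
  + by move=> [[? ?] [? ?]].
  move=> [[b a] [a1 b1]] [[b' a'] [a1' b1']] /=.
  rewrite rchoiE tensorE !scE !PhiE (relabel_bij (g := fun p : (B * A)%type => (p.2, p.1))) //=;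
    last by move=> [? ?]. 2: by move=> [? ?].
  rewrite eopE !xpair_eqE !natb_and card_prodC invfM; ring.
-
  move=> A B hA hB.
  have Ht := Hten _ _ _ _ (Fid A hA) (H1 B hB).
  apply: (F_relabel Hok (sp_comp (sp_comp (sp_assocV A B B) (sp_prod (sp_swap A B) (sp_id B))) (sp_assoc B A B)) Ht
     (g := fun p : (B * (A * B))%type => (p.2.1, (p.1, p.2.2)))).
  + by move=> [? [? ?]].
  + by move=> [? [? ?]].
  move=> [b [a b1]] [b' [a' b1']] /=.
  rewrite rchoiE tensorE !scE PhiE idopE ptr1E.
  rewrite (sum_only (x:=a)) => [|a2 ha]; last by rewrite eopE !xpair_eqE (negbTE ha) /= mul0r.
  rewrite eopE !xpair_eqE !natb_and eqxx card_prodC invfM /=; ring.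
-
  move=> A B C' M N chM chN CDM CDN.
  have [linN tpN _] := chN.
  have hBA := density_card (Hden _ _ CDM).
  have hB : (0 < #|B|)%N by move: hBA; rewrite card_prod muln_gt0 => /andP[].
  have hA : (0 < #|A|)%N by move: hBA; rewrite card_prod muln_gt0 => /andP[].
  pose mu0 : op R ((C' * A) * (B * A))%type := [ffun x => rchoi N ((x.1.1.1, x.1.2.1), (x.2.1.1, x.2.2.1)) *
     ((#|A|%:R)^-1 * Phi ((x.1.1.2, x.1.2.2), (x.2.1.2, x.2.2.2)))].
  have mu0E : forall c a b a1 c' a' b' a1', mu0 (((c, a), (b, a1)), ((c', a'), (b', a1'))) =
      rchoi N ((c, b), (c', b')) * ((#|A|%:R)^-1 * ((a == a1)%:R * (a' == a1')%:R)).
    by move=> *; rewrite ffunE /= PhiE.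
  have Fmu0 : F _ mu0.
    apply: (F_relabel Hok (sp_mid C' B A A) (Hten _ _ _ _ CDN (H1 A hA))
      (g := fun p : ((C' * A) * (B * A))%type => ((p.1.1, p.2.1), (p.1.2, p.2.2)))).
    + by move=> [[? ?] [? ?]].
    + by move=> [[? ?] [? ?]].
    move=> [[c a] [b a1]] [[c' a'] [b' a1']] /=.
    by rewrite mu0E tensorE; congr (_ * _); rewrite scE PhiE.
  have hptr : ptr1 mu0 = (#|{: B * A}|%:R)^-1 *: idop.
    apply: ffun_ext2 => -[b a1] [b' a1']; rewrite ptr1E scE idopE sum_pair exchange_big /=.
    rewrite (sum_only (x:=a1)) => [|a ha]; last first.
      by apply: big1 => c _; rewrite mu0E ?(negbTE ha) ?(neqF ha) mul0r mulr0 mulr0.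
    under eq_bigr do rewrite mu0E eqxx mul1r.
    rewrite -mulr_suml.
    have -> : \sum_c rchoi N ((c, b), (c, b')) = ptr1 (rchoi N) (b, b') by rewrite ptr1E.
    rewrite ptr1_rchoi // scE idopE xpair_eqE natb_and card_prodC invfM; ring.
  have := H2 _ _ _ _ CDM Fmu0 hptr.
  rewrite /CD.
  have -> : rchoi (N \o M) = #|{: B * A}|%:R *: link_state mu0 (rchoi M); last by [].
  apply: ffun_ext2 => -[c a] [c' a'].
  rewrite rchoiE [RHS]scE linkE sum_pair [RHS]mulr_sumr /= (lin_expand _ _ _ linN) mulr_sumr.
  apply: eq_bigr => b _.
  rewrite [in RHS](sum_only (x:=a)) => [|a1 ha]; last first.
    by apply: big1 => -[b' a1'] _; rewrite mu0E ?(negbTE ha) ?(neqF ha) mul0r mulr0 mulr0 mul0r.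
  rewrite [in RHS]sum_pair !mulr_sumr; apply: eq_bigr => b' _.
  rewrite [in RHS](sum_only (x:=a')) => [|a1 ha]; last first.
    by rewrite mu0E ?(negbTE ha) ?(neqF ha) mulr0 mulr0 mulr0 mul0r.
  rewrite mu0E !eqxx !rchoiE card_prodC.
  have := card_neq0 hA; have := card_neq0 hB.
  move: (#|A|%:R : C) (#|B|%:R : C) => x y hy hx.
  by rewrite /=; field; rewrite hx hy.
-
  move=> A B C' D M N chM chN CDM CDN.
  have Ht := Hten _ _ _ _ CDM CDN.
  apply: (F_relabel Hok (sp_mid B A D C') Ht
     (g := fun p : ((B * D) * (A * C'))%type => ((p.1.1, p.2.1), (p.1.2, p.2.2)))).
  + by move=> [[? ?] [? ?]].
  + by move=> [[? ?] [? ?]].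
  move=> [[b d] [a c]] [[b' d'] [a' c']] /=.
  rewrite rchoiE tensorE !rchoiE partensor_eop tensorE card_prodC invfM; ring.
Qed.

Theorem theorem1_main (F : free_family R) :
  free_states_ok F ->
  (CD_resource_theory F <->
   ((forall A : finType, (0 < #|A|)%N ->
       F (A * A)%type ((#|A|%:R)^-1 *: (@Phi R A))) /\
    (forall (A B : finType) (rho : op R A) (mu : op R (B * A)%type),
       F A rho -> F (B * A)%type mu ->
       ptr1 mu = (#|A|%:R)^-1 *: idop ->
       F B (#|A|%:R *: link_state mu rho)))).
Proof. by move=> Hok; split; [exact: forward | exact: backward]. Qed.



End Psd.

Unset Implicit Arguments.
Set Strict Implicit.

Theorem theorem1 (R : realType) (F : free_family R) :
  free_states_ok F ->
  (CD_resource_theory F <->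
   ((forall A : finType, (0 < #|A|)%N ->
       F (A * A)%type ((#|A|%:R)^-1 *: (@Phi R A))) /\
    (forall (A B : finType) (rho : op R A) (mu : op R (B * A)%type),
       F A rho -> F (B * A)%type mu ->
       ptr1 mu = (#|A|%:R)^-1 *: idop ->
       F B (#|A|%:R *: link_state mu rho)))).
Proof. exact: theorem1_main. Qed.
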